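(* Let \(\mathcal G\) be an étale topological groupoid whose object space \(\mathcal G^{(0)}\) is sober, and let \(S=\mathrm{Bis}(\mathcal G)\) with idempotent part \(E\subseteq S\). Call \(e\in E\) irreducible if \(e\neq1\) and \(e=e_1e_2\) with \(e_1,e_2\in E\) implies \(e_1=e\) or \(e_2=e\). For irreducible \(e\in E\), define \(\varphi_e\colon E\to\{0,1\}\) by \(\varphi_e(f)=0\) if and only if \(f\le e\). Then each \(\varphi_e\) is a character on \(E\), and the set \(X\subseteq\hat E\) of all \(\varphi_e\) with \(e\) irreducible is \(S\)-invariant. Moreover, the restriction of \(\mathcal G(S)\) to \(X\) is naturally isomorphic to \(\mathcal G\).
   Context: A topological space is sober if every non-empty irreducible closed subset is the closure of a unique point. A closed set \(A\) is irreducible if \(A=A_1\cup A_2\) with \(A_i\) closed implies \(A_1=A\) or \(A_2=A\). A bisection of a topological groupoid is an open subset of the arrow space on which range and source maps are injective and open. A groupoid is étale if bisections cover its arrow space. \(\mathrm{Bis}(\mathcal G)\) is the inverse semigroup of bisections with \(st=\{gh:g\in s,h\in t\}\) and \(s^*=\{g^{-1}:g\in s\}\), unit \(1=\mathcal G^{(0)}\) and zero \(\emptyset\). Its idempotents are exactly the open subsets of \(\mathcal G^{(0)}\), with product \(\cap\) and order \(\subseteq\). For an inverse semigroup \(S\) with idempotents \(E\): a character is a map \(\varphi\colon E\to\{0,1\}\) with \(\varphi(0)=0\), \(\varphi(1)=1\), \(\varphi(ef)=\varphi(e)\varphi(f)\). \(\hat E\) is the set of characters with the topology generated by \(U_e=\{\varphi:\varphi(e)=1\}\).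 \(S\) acts on \(\hat E\) by \(s\cdot\varphi(e)=\varphi(s^*es)\) for \(\varphi\in U_{s^*s}\). \(\mathcal G(S)\) is the germ groupoid of this action. Objects are \(\hat E\). Arrows are classes \([s,\varphi]\) with \(s\in S\), \(\varphi\in U_{s^*s}\), where \((s,\varphi)\sim(t,\psi)\) iff \(\varphi=\psi\) and \(se=te\) for some \(e\in E\) with \(\varphi(e)=1\). The structure maps are \(\mathrm s[s,\varphi]=\varphi\), \(\mathrm r[s,\varphi]=s\cdot\varphi\), \([s,t\cdot\psi][t,\psi]=[st,\psi]\), with the topology generated by the sets \(\{[s,\varphi]:\varphi\in U\}\) for \(U\subseteq U_{s^*s}\) open. The restriction of a groupoid to an invariant subset \(X\) of objects is the subgroupoid of arrows with source (equivalently range) in \(X\). *)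

(* Defs.v *)
From HB Require Import structures.
From mathcomp Require Import all_boot.
From mathcomp Require Import boolp classical_sets topology.

Set Implicit Arguments.
Unset Strict Implicit.
Unset Printing Implicit Defensive.

Local Open Scope classical_set_scope.

Definition irreducible_closed (T : topologicalType) (A : set T) : Prop :=
  closed A /\
  forall A1 A2 : set T, closed A1 -> closed A2 -> A = A1 `|` A2 ->
    A1 = A \/ A2 = A.

Definition sober (T : topologicalType) : Prop :=
  forall A : set T, A !=set0 -> irreducible_closed A ->
    exists! x : T, closure [set x] = A.

(* unt embeds O as the unit space G^(0).  [mul g h] is the product     *)
(* "g h" (first h, then g), meaningful when src g = rng h.              *)

Record groupoid_data (O A : Type) := GroupoidData {
  src : A -> O;
  rng : A -> O;
  unt : O -> A;
  inv : A -> A;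
  mul : A -> A -> A }.

Section Groupoid.
Variables (O A : topologicalType) (G : groupoid_data O A).

Local Notation src := (src G).
Local Notation rng := (rng G).
Local Notation unt := (unt G).
Local Notation inv := (inv G).
Local Notation mul := (mul G).

Definition composable (p : A * A) : Prop := src p.1 = rng p.2.

Definition is_groupoid : Prop :=
  [/\ (forall x, src (unt x) = x /\ rng (unt x) = x),
      (forall g h, src g = rng h -> src (mul g h) = src h /\ rng (mul g h) = rng g),
      (forall g h k, src g = rng h -> src h = rng k ->
          mul (mul g h) k = mul g (mul h k)),
      (forall g, mul (unt (rng g)) g = g /\ mul g (unt (src g)) = g) &
      (forall g, [/\ src (inv g) = rng g, rng (inv g) = src g,
                     mul (inv g) g = unt (src g) & mul g (inv g) = unt (rng g)])].

(* structure maps continuous; multiplication continuous on the space of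
   composable pairs (subspace of the product A * A) *)
Definition is_top_groupoid : Prop :=
  [/\ is_groupoid,
      [/\ continuous src, continuous rng, continuous unt & continuous inv] &
      forall W : set A, open W ->
        exists V : set (A * A), open V /\
          [set p | composable p /\ W (mul p.1 p.2)] = V `&` composable].

Definition bisection (s : set A) : Prop :=
  [/\ open s,
      {in s &, injective src}, {in s &, injective rng},
      (forall V : set A, open V -> V `<=` s -> open (src @` V)) &
      (forall V : set A, open V -> V `<=` s -> open (rng @` V))].

Definition etale : Prop := forall g : A, exists s, bisection s /\ s g.

Definition bmul (s t : set A) : set A :=
  [set g | exists a b, [/\ s a, t b, src a = rng b & g = mul a b]].

Definition bstar (s : set A) : set A := inv @` s.

Definition bone : set A := range unt.

Definition idem (e : set A) : Prop := bisection e /\ bmul e e = e.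

Definition irreducible_idem (e : set A) : Prop :=
  [/\ idem e, e <> bone &
      forall e1 e2, idem e1 -> idem e2 -> e = bmul e1 e2 -> e1 = e \/ e2 = e].

(* characters on E.  A character is represented as a function on all
   subsets of A which vanishes outside E (so equality of characters is
   plain equality of functions). *)
Definition is_character (phi : set A -> bool) : Prop :=
  [/\ (forall f, ~ idem f -> phi f = false),
      phi set0 = false, phi bone = true &
      forall e f, idem e -> idem f -> phi (bmul e f) = phi e && phi f].

Definition Ehat : set (set A -> bool) := [set phi | is_character phi].

Definition Ue (e : set A) : set (set A -> bool) :=
  [set phi | is_character phi /\ phi e].

(* topology generated by a family B of subsets of a space X (ambient T):
   arbitrary unions of finite intersections (the empty intersection is X) *)
Definition gen_open (T : Type) (X : set T) (B : set (set T)) (W : set T) : Prop :=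
  exists F : set (seq (set T)),
    (forall l, F l -> forall b, b \in l -> B b) /\
    W = \bigcup_(l in F) foldr setI X l.

Definition Ehat_open (U : set (set A -> bool)) : Prop :=
  gen_open Ehat [set V | exists e, idem e /\ V = Ue e] U.

(* action of S on Ehat: s . phi (e) = phi (s* e s), for phi in U_{s*s} *)
Definition act (s : set A) (phi : set A -> bool) : set A -> bool :=
  fun e => `[< idem e >] && phi (bmul (bmul (bstar s) e) s).

Definition phi_e (e : set A) : set A -> bool :=
  fun f => `[< idem f /\ ~ (f `<=` e) >].

Definition Xset : set (set A -> bool) :=
  [set phi | exists e, irreducible_idem e /\ phi = phi_e e].

Definition S_invariant (Y : set (set A -> bool)) : Prop :=
  forall s phi, bisection s -> Y phi -> phi (bmul (bstar s) s) ->
    Y (act s phi).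

(* Arrows of G(S) are classes of pairs (s, phi); we work with the pairs
   and the germ equivalence [germ_eq]. *)

Definition germ := (set A * (set A -> bool))%type.

Definition germ_valid (p : germ) : Prop :=
  bisection p.1 /\ is_character p.2 /\ p.2 (bmul (bstar p.1) p.1).

Definition germ_eq (p q : germ) : Prop :=
  p.2 = q.2 /\ exists e, [/\ idem e, p.2 e & bmul p.1 e = bmul q.1 e].

Definition gsrc (p : germ) : set A -> bool := p.2.
Definition grng (p : germ) : set A -> bool := act p.1 p.2.
(* [s, t.psi][t, psi] = [st, psi] *)
Definition gmul (p q : germ) : germ := (bmul p.1 q.1, q.2).

(* basic open sets {[s,phi] : phi in U}, U open in Ehat, U in U_{s*s},
   as sets of representing pairs *)
Definition germ_basic (W : set germ) : Prop :=
  exists s U, [/\ bisection s, Ehat_open U, U `<=` Ue (bmul (bstar s) s) &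
    W = [set q | germ_valid q /\ U q.2 /\ germ_eq q (s, q.2)]].

Definition germ_open (W : set germ) : Prop := gen_open germ_valid germ_basic W.

Definition germ_restr : set germ := [set p | germ_valid p /\ Xset p.2].

(* (F0, F1) is an isomorphism of topological groupoids from G onto the
   restriction of G(S) to Xset (arrows of G(S) taken up to germ_eq;
   topologies on Xset and on the restriction are subspace topologies). *)
Definition germ_restriction_iso (F0 : O -> (set A -> bool)) (F1 : A -> germ) : Prop :=
  [/\ (* objects: homeomorphism O ~ Xset *)
      [/\ injective F0, F0 @` setT = Xset,
          (forall U : set O, open U ->
              exists W, Ehat_open W /\ F0 @` U = W `&` Xset) &
          (forall W, Ehat_open W -> open (F0 @^-1` W))],
      (* arrows: bijection onto classes of germs with source in Xset *)
      [/\ (forall g, germ_restr (F1 g)),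
          (forall g h, germ_eq (F1 g) (F1 h) -> g = h) &
          (forall p, germ_restr p -> exists g, germ_eq p (F1 g))],
      [/\ (forall g, gsrc (F1 g) = F0 (src g)),
          (forall g, grng (F1 g) = F0 (rng g)) &
          (forall g h, src g = rng h ->
              germ_eq (F1 (mul g h)) (gmul (F1 g) (F1 h)))] &
      (* arrows: homeomorphism *)
      [/\ (forall W, germ_open W -> open (F1 @^-1` W)) &
          (forall U : set A, open U -> exists W, germ_open W /\
              forall p, germ_restr p ->
                (W p <-> exists g, U g /\ germ_eq p (F1 g)))]].

End Groupoid.

(* Main.v *)
Require Import Defs.
From mathcomp Require Import all_boot.
From mathcomp Require Import boolp classical_sets topology.

Set Implicit Arguments.
Unset Strict Implicit.
Unset Printing Implicit Defensive.
Local Open Scope classical_set_scope.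

Section S.
Variables (O A : topologicalType) (G : groupoid_data O A).
Hypothesis HG : is_top_groupoid G.
Hypothesis Het : etale G.

Local Notation src := (Defs.src G).
Local Notation rng := (Defs.rng G).
Local Notation unt := (Defs.unt G).
Local Notation inv := (Defs.inv G).
Local Notation mul := (Defs.mul G).

Lemma Hgrp : is_groupoid G. Proof. by case: HG. Qed.

Lemma src_unt x : src (unt x) = x. Proof. by case: Hgrp => /(_ x) []. Qed.
Lemma rng_unt x : rng (unt x) = x. Proof. by case: Hgrp => /(_ x) []. Qed.
Lemma src_mul g h : src g = rng h -> src (mul g h) = src h.
Proof. by case: Hgrp => _ /(_ g h) H *; case: H. Qed.
Lemma rng_mul g h : src g = rng h -> rng (mul g h) = rng g.
Proof. by case: Hgrp => _ /(_ g h) H *; case: H. Qed.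
Lemma mulA g h k : src g = rng h -> src h = rng k ->
  mul (mul g h) k = mul g (mul h k).
Proof. by case: Hgrp => _ _ H *; apply: H. Qed.
Lemma mul_untl g : mul (unt (rng g)) g = g. Proof. by case: Hgrp => _ _ _ /(_ g) []. Qed.
Lemma mul_untr g : mul g (unt (src g)) = g. Proof. by case: Hgrp => _ _ _ /(_ g) []. Qed.
Lemma src_inv g : src (inv g) = rng g. Proof. by case: Hgrp => _ _ _ _ /(_ g) []. Qed.
Lemma rng_inv g : rng (inv g) = src g. Proof. by case: Hgrp => _ _ _ _ /(_ g) []. Qed.
Lemma mul_invl g : mul (inv g) g = unt (src g). Proof. by case: Hgrp => _ _ _ _ /(_ g) []. Qed.
Lemma mul_invr g : mul g (inv g) = unt (rng g). Proof. by case: Hgrp => _ _ _ _ /(_ g) []. Qed.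
Lemma unt_inj : injective unt.
Proof. by move=> x y /(congr1 src); rewrite !src_unt. Qed.
Lemma mul_unt x : mul (unt x) (unt x) = unt x.
Proof. by rewrite -{1}[x](rng_unt x) mul_untl. Qed.

Lemma Hcont : [/\ continuous src, continuous rng, continuous unt & continuous inv].
Proof. by case: HG. Qed.
Lemma src_cont : continuous src. Proof. by case: Hcont. Qed.
Lemma rng_cont : continuous rng. Proof. by case: Hcont. Qed.
Lemma unt_cont : continuous unt. Proof. by case: Hcont. Qed.
Lemma inv_cont : continuous inv. Proof. by case: Hcont. Qed.

Lemma open_pre (T U : topologicalType) (f : T -> U) (V : set U) :
  continuous f -> open V -> open (f @^-1` V).
Proof. by move=> cf oV; apply: open_comp => // x _; apply: cf. Qed.

Lemma inj_in (s : set A) (f : A -> O) : {in s &, injective f} ->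
  forall g h, s g -> s h -> f g = f h -> g = h.
Proof. by move=> H g h sg sh; apply: H; apply: mem_set. Qed.

Lemma src_open V : open V -> open (src @` V).
Proof.
move=> oV.
have -> : src @` V = \bigcup_(s in bisection G) (src @` (V `&` s)).
  apply/seteqP; split=> [x [g Vg <-]|x [s _ [g [Vg _] <-]]]; last by exists g.
  have [s [bs sg]] := Het g; exists s => //; by exists g.
apply: bigcup_open => s [os _ _ H _]; apply: H; [exact: openI|exact: subIsetr].
Qed.

Lemma rng_open V : open V -> open (rng @` V).
Proof.
move=> oV.
have -> : rng @` V = \bigcup_(s in bisection G) (rng @` (V `&` s)).
  apply/seteqP; split=> [x [g Vg <-]|x [s _ [g [Vg _] <-]]]; last by exists g.
  have [s [bs sg]] := Het g; exists s => //; by exists g.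
apply: bigcup_open => s [os _ _ _ H]; apply: H; [exact: openI|exact: subIsetr].
Qed.

Lemma bisectionP s : bisection G s <->
  [/\ open s, (forall g h, s g -> s h -> src g = src h -> g = h) &
      (forall g h, s g -> s h -> rng g = rng h -> g = h)].
Proof.
split=> [[os i1 i2 _ _]|[os i1 i2]]; first by split=> //; apply: inj_in.
split=> //.
- by move=> g h /set_mem gs /set_mem hs; apply: i1.
- by move=> g h /set_mem gs /set_mem hs; apply: i2.
- by move=> V oV _; apply: src_open.
- by move=> V oV _; apply: rng_open.
Qed.

Lemma bisection_sub s t : bisection G s -> open t -> t `<=` s -> bisection G t.
Proof.
move=> /bisectionP [_ i1 i2] ot ts; apply/bisectionP; split=> //.
- by move=> g h /ts ? /ts ?; apply: i1.
- by move=> g h /ts ? /ts ?; apply: i2.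
Qed.

Lemma open_range_unt : open (range unt).
Proof.
have -> : range unt = \bigcup_(s in bisection G) (s `&` rng @^-1` (unt @^-1` s)).
  apply/seteqP; split=> [g [x _ <-]|g [s bs [sg /= sx]]].
    have [s [bs sx]] := Het (unt x); exists s => //; split=> //=.
    by rewrite rng_unt.
  exists (rng g) => //. move/bisectionP: bs => [_ _ i2].
  by apply: i2 => //; rewrite rng_unt.
apply: bigcup_open => s /bisectionP [os _ _]; apply: openI => //.
by apply: open_pre; [exact: rng_cont|apply: open_pre => //; exact: unt_cont].
Qed.

Lemma unt_open V : open V -> open (unt @` V).
Proof.
move=> oV; have -> : unt @` V = range unt `&` rng @^-1` V.
  apply/seteqP; split=> [g [x Vx <-]|g [[x _ <-]]]; first by split; [exists x|rewrite /= rng_unt].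
  by rewrite /= rng_unt => Vx; exists x.
by apply: openI; [exact: open_range_unt|apply: open_pre => //; exact: rng_cont].
Qed.


Lemma idemP e : idem G e <-> open e /\ e `<=` range unt.
Proof.
split=> [[be ee]|[oe eu]].
  have /bisectionP [oe i1 i2] := be; split=> // g eg.
  have : bmul G e e g by rewrite ee.
  case=> a [b [ea eb sab gab]].
  have ga : g = a by apply: i2 => //; rewrite gab rng_mul.
  have sb : src b = src g by rewrite gab src_mul.
  have bu : b = unt (src g).
    have : mul (inv g) g = b.
      have sgb : src g = rng b by rewrite ga.
      rewrite {2}gab -ga -mulA; first by rewrite mul_invl sgb mul_untl.
        by rewrite src_inv.
      by [].
    by rewrite mul_invl => E; rewrite E.
  by exists (src g) => //; rewrite -bu; apply: i1.
split.
  apply/bisectionP; split=> //.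
  - by move=> g h /eu [x _ <-] /eu [y _ <-]; rewrite !src_unt => ->.
  - by move=> g h /eu [x _ <-] /eu [y _ <-]; rewrite !rng_unt => ->.
apply/seteqP; split=> [g [a [b [ea eb sab ->]]]|g eg].
  have [x _ ax] := eu _ ea; have [y _ bx] := eu _ eb.
  move: sab ea; rewrite -ax -bx src_unt rng_unt => <- ea.
  by rewrite mul_unt.
have [x _ gx] := eu _ eg; move: eg; rewrite -gx => eg; exists (unt x), (unt x); split=> //.
  by rewrite src_unt rng_unt.
by rewrite mul_unt.
Qed.

Lemma idem_sub e : idem G e -> e `<=` range unt.
Proof. by case/idemP. Qed.

Lemma idem_open e : idem G e -> open e.
Proof. by case/idemP. Qed.

Lemma bmul_idem_r s e : e `<=` range unt ->
  bmul G s e = [set g | s g /\ e (unt (src g))].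
Proof.
move=> eu; apply/seteqP; split=> [g [a [b [sa eb sab ->]]]|g [sg eg]].
  have [x _ bx] := eu _ eb; move: sab eb; rewrite -bx rng_unt => <- eb.
  by rewrite mul_untr.
by exists g, (unt (src g)); rewrite rng_unt mul_untr.
Qed.

Lemma bmul_idem e f : e `<=` range unt -> f `<=` range unt ->
  bmul G e f = e `&` f.
Proof.
move=> eu fu; rewrite bmul_idem_r //; apply/seteqP; split=> [g [eg fg]|g [eg fg]].
  by have [x _ gx] := eu _ eg; move: fg eg; rewrite -gx src_unt.
by split=> //; have [x _ gx] := eu _ eg; move: fg; rewrite -gx src_unt.
Qed.

Lemma idem_unt V : open V -> idem G (unt @` V).
Proof. by move=> oV; apply/idemP; split; [exact: unt_open|move=> g [x _ <-]; exists x]. Qed.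

Lemma idem_bone : idem G (bone G).
Proof. by apply/idemP; split=> //; exact: open_range_unt. Qed.

Lemma idem_I e f : idem G e -> idem G f -> idem G (bmul G e f).
Proof.
move=> /idemP [oe eu] /idemP [of' fu]; rewrite bmul_idem //.
by apply/idemP; split; [exact: openI|move=> g [/eu]].
Qed.

Lemma idem_eq e : e `<=` range unt -> e = unt @` (unt @^-1` e).
Proof.
move=> eu; apply/seteqP; split=> [g eg|g [x ex <-] //].
by have [x _ gx] := eu _ eg; move: eg; rewrite -gx => ex; exists x.
Qed.

Lemma open_pre_unt e : open e -> open (unt @^-1` e).
Proof. by move=> oe; apply: open_pre => //; exact: unt_cont. Qed.

Definition chi (x : O) : set A -> bool := fun f => `[< idem G f /\ f (unt x) >].

Lemma chiP x f : chi x f <-> idem G f /\ f (unt x).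
Proof. by rewrite /chi; split=> [/asboolP|?]; [|apply/asboolP]. Qed.

Lemma chi_char x : is_character G (chi x).
Proof.
split.
- by move=> f nf; apply/negbTE/negP => /chiP [].
- by apply/negbTE/negP => /chiP [].
- by apply/chiP; split; [exact: idem_bone|exists x].
- move=> e f ie if'; have /idemP [_ eu] := ie; have /idemP [_ fu] := if'.
  apply/idP/andP => [/chiP [_]|[/chiP [_ ex] /chiP [_ fx]]].
    by rewrite bmul_idem // => -[ex fx]; split; apply/chiP.
  by apply/chiP; split; [exact: idem_I|rewrite bmul_idem].
Qed.

Lemma chi_inj_open x y : chi x = chi y -> forall V, open V -> V x -> V y.
Proof.
move=> exy V oV Vx.
have : chi x (unt @` V) by apply/chiP; split; [exact: idem_unt|exists x].
by rewrite exy => /chiP [_ [z Vz /unt_inj <-]].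
Qed.

Lemma bss s : bisection G s -> bmul G (bstar G s) s = unt @` (src @` s).
Proof.
move=> /bisectionP [_ _ i2].
apply/seteqP; split=> [g [a [b [[c sc <-] sb sab ->]]]|g [x [b sb <-] <-]].
  move: sab; rewrite src_inv => rcb.
  have cb : c = b by apply: i2.
  by rewrite cb mul_invl; exists (src b) => //; exists b.
by exists (inv b), b; split=> //; [exists b|rewrite src_inv|rewrite mul_invl].
Qed.

Lemma bses s e : bisection G s -> e `<=` range unt ->
  bmul G (bmul G (bstar G s) e) s =
  unt @` (src @` [set g | s g /\ e (unt (rng g))]).
Proof.
move=> /bisectionP [_ _ i2] eu.
rewrite (bmul_idem_r (bstar G s) eu).
apply/seteqP; split=> [g [a [b [[[c sc <-] esa] sb sab ->]]]|g [x [b [sb eb] <-] <-]].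
  move: sab esa; rewrite src_inv => rcb esa.
  have cb : c = b by apply: i2.
  by rewrite cb mul_invl; exists (src b) => //; exists b; split=> //; rewrite -rcb.
exists (inv b), b; split=> //; try by rewrite ?src_inv ?mul_invl.
by split; [exists b|rewrite src_inv].
Qed.

Lemma chi_ss x s : bisection G s ->
  chi x (bmul G (bstar G s) s) <-> exists g, s g /\ src g = x.
Proof.
move=> bs; rewrite bss //; split=> [/chiP [_ [y [g sg <-]] /unt_inj <-]|[g [sg <-]]].
  by exists g.
apply/chiP; split; last by exists (src g) => //; exists g.
by apply: idem_unt; apply: src_open; case/bisectionP: bs.
Qed.

Lemma act_chi s g : bisection G s -> s g -> act G s (chi (src g)) = chi (rng g).
Proof.
move=> bs sg; apply/funext => f; rewrite /act.
have /bisectionP [os i1 _] := bs.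
case: (pselect (idem G f)) => [fi|nf]; last first.
  rewrite (_ : `[< idem G f >] = false) /=; last by apply/negbTE/negP => /asboolP.
  by apply/esym/negbTE/negP => /chiP [].
rewrite (_ : `[< idem G f >] = true) /=; last by apply/asboolP.
have fu := idem_sub fi.
rewrite bses //; apply/idP/idP => [/chiP [_ [y [h [sh fh] <-] /unt_inj e]]|/chiP [_ fg]].
  by apply/chiP; split=> //; rewrite -(i1 _ _ sh sg e).
apply/chiP; split; last by exists (src g) => //; exists g.
apply: idem_unt; apply: src_open.
by apply: openI => //; exact: (open_pre rng_cont (open_pre_unt (idem_open fi))).
Qed.

Definition cl (x : O) := closure [set x].
Definition ec (x : O) : set A := unt @` (~` cl x).

Lemma cl_open x y V : open V -> cl x y -> V y -> V x.
Proof.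
move=> oV cxy Vy; have : nbhs y V by apply: open_nbhs_nbhs; split.
by move/cxy => [z [-> ]].
Qed.

Lemma cl_closed x : closed (cl x). Proof. exact: closed_closure. Qed.
Lemma cl_x x : cl x x. Proof. exact: subset_closure. Qed.

Lemma cl_sub x C : closed C -> C x -> cl x `<=` C.
Proof.
move=> cC Cx; rewrite (closure_id C).1 //; apply: closureS => y ->//.
Qed.

Lemma sub_ec f x : idem G f -> (f `<=` ec x <-> ~ f (unt x)).
Proof.
move=> fi; have /idemP [of' fu] := fi; split=> [fe fx|nfx g fg].
  by have [y ny /unt_inj yx] := fe _ fx; apply: ny; rewrite yx; exact: cl_x.
have [y _ gy] := fu _ fg; exists y => //; move=> cy; apply: nfx.
have : (unt @^-1` f) x by apply: (cl_open (open_pre_unt of') cy); rewrite /= gy.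
by [].
Qed.

Lemma bool_eq (b1 b2 : bool) : (b1 <-> b2) -> b1 = b2.
Proof. by case: b1; case: b2 => // [[H1 H2]]; [have := H1 isT|have := H2 isT]. Qed.

Lemma phi_ec x : phi_e G (ec x) = chi x.
Proof.
apply/funext => f; apply: bool_eq; rewrite chiP /phi_e; split.
  by move/asboolP => [fi nf]; split=> //; apply: contrapT => nfx; apply: nf; apply/sub_ec.
by move=> [fi fx]; apply/asboolP; split=> // /(sub_ec x fi).
Qed.

Lemma idem_ec x : idem G (ec x).
Proof. by apply: idem_unt; apply: closed_openC; exact: cl_closed. Qed.

Lemma irr_ec x : irreducible_idem G (ec x).
Proof.
split; first exact: idem_ec.
  move=> E; have : ec x (unt x) by rewrite E; exists x.
  by move=> [y ny /unt_inj yx]; apply: ny; rewrite yx; exact: cl_x.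
move=> e1 e2 i1 i2 E.
have nx0 : ~ ec x (unt x).
  by move=> -[y ny /unt_inj yx]; apply: ny; rewrite yx; exact: cl_x.
have nx : ~ (e1 `&` e2) (unt x).
  by move: nx0; rewrite E (bmul_idem (idem_sub i1) (idem_sub i2)).
have sub1 : ec x `<=` e1 by rewrite E (bmul_idem (idem_sub i1) (idem_sub i2)) // => g [].
have sub2 : ec x `<=` e2 by rewrite E (bmul_idem (idem_sub i1) (idem_sub i2)) // => g [].
case: (pselect (e1 (unt x))) => h1.
  right; apply/seteqP; split=> //; apply/sub_ec => // h2; exact: nx.
left; apply/seteqP; split=> //; exact/sub_ec.
Qed.

Lemma cl_irr x : irreducible_closed (cl x).
Proof.
split; first exact: cl_closed.
move=> A1 A2 c1 c2 E.
have : (A1 `|` A2) x by rewrite -E; exact: cl_x.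
case=> h.
  left; apply/seteqP; split; last exact: cl_sub.
  by rewrite E => y ?; left.
right; apply/seteqP; split; last exact: cl_sub.
by rewrite E => y ?; right.
Qed.

Lemma chi_inj (Hs : sober O) x y : chi x = chi y -> x = y.
Proof.
move=> exy.
have sxy : cl x `<=` cl y.
  apply: cl_sub; first exact: cl_closed.
  move=> B; rewrite nbhsE => -[V [oV Vx] VB]; exists y; split=> //; apply: VB.
  exact: (chi_inj_open exy).
have syx : cl y `<=` cl x.
  apply: cl_sub; first exact: cl_closed.
  move=> B; rewrite nbhsE => -[V [oV Vy] VB]; exists x; split=> //; apply: VB.
  exact: (chi_inj_open (esym exy)).
have exy' : cl x = cl y by apply/seteqP; split.
have ne : cl x !=set0 by exists x; exact: cl_x.
have [z [_ uz]] := Hs (cl x) ne (cl_irr x).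
by rewrite -(uz x) // (uz y).
Qed.

Lemma irr_is_ec (Hs : sober O) e : irreducible_idem G e -> exists x, e = ec x.
Proof.
move=> [ie ne irr]; have /idemP [oe eu] := ie.
set C := ~` (unt @^-1` e).
have cC : closed C by apply: open_closedC; exact: open_pre_unt.
have nC : C !=set0.
  apply: contrapT => nC; apply: ne; apply/seteqP; split=> // g [x _ <-].
  by apply: contrapT => nx; apply: nC; exists x.
have iC : irreducible_closed C.
  split=> // A1 A2 c1 c2 E.
  pose e1 := unt @` (~` A1); pose e2 := unt @` (~` A2).
  have i1 : idem G e1 by apply: idem_unt; exact: closed_openC.
  have i2 : idem G e2 by apply: idem_unt; exact: closed_openC.
  have Ee : e = bmul G e1 e2.
    rewrite (bmul_idem (idem_sub i1) (idem_sub i2)); apply/seteqP; split=> [g eg|g [[z z1 <-] [z' z2 /unt_inj zz]]].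
      have [z _ gz] := eu _ eg.
      have nz : ~ C z by rewrite /C /= gz => /(_ eg).
      by rewrite -gz; split; exists z => // hz; apply: nz; rewrite E; [left|right].
    move: z2; rewrite zz => z2.
    by apply: contrapT => nz; have : C z by []; rewrite E => -[].
  have back (B : set O) : closed B -> unt @` (~` B) = e -> B = C.
    move=> cB EB; rewrite -[B]setCK; congr (~` _); rewrite -EB.
    apply/seteqP; split=> [y ny|y [z nz /unt_inj <-] //]; by exists y.
  case: (irr e1 e2 i1 i2 Ee) => h; [left|right]; exact: back.
have [x [cx _]] := Hs C nC iC.
exists x; rewrite /ec /cl cx /C setCK; exact: idem_eq.
Qed.

Lemma XsetP (Hs : sober O) phi : Xset G phi <-> exists x, phi = chi x.
Proof.
split=> [[e [ie ->]]|[x ->]].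
  by have [x ex] := irr_is_ec Hs ie; exists x; rewrite ex phi_ec.
by exists (ec x); split; [exact: irr_ec|rewrite phi_ec].
Qed.

Lemma gen_open_pre (T : Type) (U : topologicalType) (f : U -> T) (X : set T) B W :
  gen_open X B W -> open (f @^-1` X) -> (forall b, B b -> open (f @^-1` b)) ->
  open (f @^-1` W).
Proof.
move=> [F [hF ->]] oX oB; rewrite preimage_bigcup; apply: bigcup_open => l Fl.
have := hF l Fl; elim: l {Fl} => [|b l IH] //= hl.
rewrite preimage_setI; apply: openI.
  by apply: oB; apply: hl; rewrite inE eqxx.
by apply: IH => c cl; apply: hl; rewrite inE cl orbT.
Qed.

Lemma Ue_open e : idem G e -> Ehat_open G (Ue G e).
Proof.
move=> ie; exists [set [:: Ue G e]]; split.
  by move=> l -> b; rewrite inE => /eqP ->; exists e.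
apply/seteqP; split=> [phi [h1 h2]|phi [l -> /= [h _]]] //.
by exists [:: Ue G e] => //=; split=> //; case: h1.
Qed.

Lemma pre_F0_open W : Ehat_open G W -> open (chi @^-1` W).
Proof.
move=> hW; apply: (gen_open_pre hW).
  have -> : chi @^-1` Ehat G = setT by apply/seteqP; split=> // x _; exact: chi_char.
  exact: openT.
move=> b [e [ie ->]].
have -> : chi @^-1` Ue G e = unt @^-1` e.
  apply/seteqP; split=> [x [_ /chiP []] //|x ex]; split; first exact: chi_char.
  by apply/chiP.
exact: open_pre_unt (idem_open ie).
Qed.

Definition sb (g : A) : set A := projT1 (cid (Het g)).
Lemma sb_bis g : bisection G (sb g). Proof. by rewrite /sb; case: cid => s []. Qed.
Lemma sb_mem g : sb g g. Proof. by rewrite /sb; case: cid => s []. Qed.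

Definition F1 (g : A) : germ A := (sb g, chi (src g)).

Lemma germ_open_eq (s t W : set A) a :
  (forall g h, s g -> s h -> src g = src h -> g = h) ->
  (forall g h, t g -> t h -> src g = src h -> g = h) ->
  open W -> W `<=` s -> W `<=` t -> W a ->
  germ_eq G (s, chi (src a)) (t, chi (src a)).
Proof.
move=> hs ht oW Ws Wt Wa; split=> //=.
exists (unt @` (src @` W)); split.
- exact: idem_unt (src_open oW).
- by apply/chiP; split; [exact: idem_unt (src_open oW)|exists (src a) => //; exists a].
have eu : unt @` (src @` W) `<=` range unt by move=> g [x _ <-]; exists x.
rewrite !bmul_idem_r //.
have key (r : set A) : (forall g h, r g -> r h -> src g = src h -> g = h) -> W `<=` r ->
   [set g | r g /\ (unt @` (src @` W)) (unt (src g))] = W.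
  move=> ir Wr; apply/seteqP; split=> [g [rg [y [w Ww <-] /unt_inj e]]|g Wg].
    by rewrite (ir g w rg (Wr _ Ww) (esym e)).
  by split; [exact: Wr|exists (src g) => //; exists g].
by rewrite !key.
Qed.

Lemma germ_mem s t x g : germ_eq G (s, chi x) (t, chi x) -> s g -> src g = x -> t g.
Proof.
move=> [_ [e [ie /chiP [_ ex] E]]] sg gx.
have eu := idem_sub ie.
have : bmul G s e g by rewrite bmul_idem_r //; split=> //; rewrite gx.
by rewrite /= E bmul_idem_r // => -[].
Qed.

Lemma germ_inter s t g : bisection G s -> bisection G t -> s g -> t g ->
  germ_eq G (s, chi (src g)) (t, chi (src g)).
Proof.
move=> /bisectionP [os hs _] /bisectionP [ot ht _] sg tg.
apply: (germ_open_eq hs ht (openI os ot)) => //; by move=> h [].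
Qed.

Lemma germ_sym p q : germ_eq G p q -> germ_eq G q p.
Proof. by move=> [e [f [i1 i2 i3]]]; split=> //; exists f; split=> //; rewrite -e. Qed.

Lemma bmul_open s t : open s -> open t -> open (bmul G s t).
Proof.
move=> os ot; rewrite openE => g0 [a0 [b0 [sa0 tb0 c0 ->]]].
rewrite /interior /=.
case: HG => _ _ /(_ t ot) [V [oV EV]].
have Vp : V (inv a0, mul a0 b0).
  have : [set p | composable G p /\ t (mul p.1 p.2)] (inv a0, mul a0 b0).
    split; first by rewrite /composable /= src_inv rng_mul.
    rewrite /= -mulA; [by rewrite mul_invl c0 mul_untl|exact: src_inv|exact: c0].
  move=> h; have : (V `&` composable G) (inv a0, mul a0 b0).
    by rewrite -EV; exact: h.
  by move=> [].
have : nbhs (inv a0, mul a0 b0) V by apply: open_nbhs_nbhs; split.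
case=> [[P Q]] /= [nP nQ] PQV.
have : nbhs a0 (inv @^-1` P) by apply: inv_cont.
rewrite nbhsE => -[P' [oP' P'a0] P'P].
have oR : open (rng @` (s `&` P')) by apply: rng_open; exact: openI.
have nR : nbhs (mul a0 b0) (rng @^-1` (rng @` (s `&` P'))).
  apply: rng_cont; apply: open_nbhs_nbhs; split=> //.
  by exists a0 => //; rewrite rng_mul.
apply: filterS (filterI nQ nR) => g [Qg [a [sa P'a] ag]].
have cp : composable G (inv a, g) by rewrite /composable /= src_inv.
have : t (mul (inv a) g).
  have : V (inv a, g) by apply: PQV; split => //; exact: P'P.
  have : composable G (inv a, g) by [].
  move=> c v; have : (V `&` composable G) (inv a, g) by [].
  by rewrite -EV => -[].
move=> tb; exists a, (mul (inv a) g); split=> //.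
  by rewrite rng_mul ?rng_inv ?src_inv.
rewrite -mulA; [by rewrite mul_invr ag mul_untl|by rewrite rng_inv|by rewrite src_inv].
Qed.

Lemma bmul_src_inj s t : bisection G s -> bisection G t ->
  forall g h, bmul G s t g -> bmul G s t h -> src g = src h -> g = h.
Proof.
move=> /bisectionP [_ hs _] /bisectionP [_ ht _].
move=> g h [a [b [sa tb cab ->]]] [a' [b' [sa' tb' cab' ->]]].
rewrite !src_mul // => bb; have eb : b = b' by apply: ht.
have ea : a = a' by apply: hs => //; rewrite cab cab' eb.
by rewrite ea eb.
Qed.

Section Main.
Hypothesis Hs : sober O.

Lemma part1 e : irreducible_idem G e -> is_character G (phi_e G e).
Proof.
move=> ie; have [x ->] := irr_is_ec Hs ie; rewrite phi_ec; exact: chi_char.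
Qed.

Lemma part2 : S_invariant G (Xset G).
Proof.
move=> s phi bs /(XsetP Hs) [x ->] /(chi_ss x bs) [g [sg <-]].
by rewrite act_chi //; apply/(XsetP Hs); exists (rng g).
Qed.

Lemma F1_restr g : germ_restr G (F1 g).
Proof.
split; last by apply/(XsetP Hs); exists (src g).
split; [exact: sb_bis|split; first exact: chi_char].
by apply/chi_ss; [exact: sb_bis|exists g; split=> //; exact: sb_mem].
Qed.

Lemma F1_basic_pre W : germ_basic G W -> open (F1 @^-1` W).
Proof.
move=> [s [U [bs oU UU ->]]].
have -> : F1 @^-1` [set q | germ_valid G q /\ U q.2 /\ germ_eq G q (s, q.2)] =
          s `&` src @^-1` (chi @^-1` U).
  apply/seteqP; split=> [g [_ [Ug E]]|g [sg Ug]].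
    by split=> //; apply: (germ_mem E); [exact: sb_mem|].
  split; first by case: (F1_restr g).
  split=> //; apply: germ_inter => //; [exact: sb_bis|exact: sb_mem].
have /bisectionP [os _ _] := bs.
apply: openI => //; apply: open_pre; [exact: src_cont|exact: pre_F0_open].
Qed.

Lemma part3 : germ_restriction_iso G chi F1.
Proof.
split.
- split.
  + by move=> x y; apply: chi_inj.
  + apply/seteqP; split=> [_ [x _ <-]|phi /(XsetP Hs) [x ->]]; last by exists x.
    by apply/(XsetP Hs); exists x.
  + move=> U oU; exists (Ue G (unt @` U)); split; first exact: Ue_open (idem_unt oU).
    apply/seteqP; split=> [_ [x Ux <-]|phi [[_ h] /(XsetP Hs) [x E]]].
      split; last by apply/(XsetP Hs); exists x.
      by split; [exact: chi_char|apply/chiP; split; [exact: idem_unt|exists x]].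
    move: h; rewrite E => /chiP [_ [y Uy /unt_inj yx]].
    by exists x => //; rewrite -yx.
  + exact: pre_F0_open.
- split.
  + exact: F1_restr.
  + move=> g h [/= E1 E2].
    have sgh : src g = src h by apply: chi_inj.
    have hg : sb h g.
      apply: (@germ_mem (sb g) (sb h) (src g)); last by [].
        by split=> //; rewrite sgh.
      exact: sb_mem.
    have /bisectionP [_ i _] := sb_bis h.
    by apply: i => //; exact: sb_mem.
  + move=> [s phi] [[bs [cphi sphi]] /(XsetP Hs) [x /= Ex]].
    move: sphi; rewrite Ex => /(chi_ss x bs) [g [sg gx]].
    exists g; rewrite /F1 -gx; apply: germ_inter => //; [exact: sb_bis|exact: sb_mem].
- split.
  + by [].
  + by move=> g; rewrite /grng /F1 /= act_chi //; [exact: sb_bis|exact: sb_mem].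
  + move=> g h c.
    rewrite /F1 /gmul /=.
    have /bisectionP [o1 i1 _] := sb_bis (mul g h).
    have /bisectionP [o2 _ _] := sb_bis g.
    have /bisectionP [o3 _ _] := sb_bis h.
    have := @germ_open_eq (sb (mul g h)) (bmul G (sb g) (sb h))
      (sb (mul g h) `&` bmul G (sb g) (sb h)) (mul g h) i1
      (bmul_src_inj (sb_bis g) (sb_bis h)) (openI o1 (bmul_open o2 o3)).
    rewrite src_mul //; apply; try by move=> k [].
    split; first exact: sb_mem.
    by exists g, h; split=> //; exact: sb_mem.
- split.
  + move=> W hW; apply: (gen_open_pre hW).
      have -> : F1 @^-1` germ_valid G = setT.
        by apply/seteqP; split=> // g _; case: (F1_restr g).
      exact: openT.
    exact: F1_basic_pre.
  + move=> U oU.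
    pose Bs (s : set A) := [set q : germ A | germ_valid G q /\
       Ue G (bmul G (bstar G s) s) q.2 /\ germ_eq G q (s, q.2)].
    pose F := [set l : seq (set (germ A)) | exists s, [/\ bisection G s, s `<=` U & l = [:: Bs s]]].
    have iss s : bisection G s -> idem G (bmul G (bstar G s) s).
      move=> bs; rewrite bss //; apply: idem_unt; apply: src_open.
      by case/bisectionP: bs.
    exists (\bigcup_(l in F) foldr setI (germ_valid G) l); split.
      exists F; split=> // l [s [bs sU ->]] b; rewrite inE => /eqP ->.
      exists s, (Ue G (bmul G (bstar G s) s)); split=> //.
      exact: Ue_open (iss s bs).
    move=> [s0 phi] [[bs0 [cphi sphi]] /(XsetP Hs) [x /= Ex]].
    move: sphi; rewrite Ex => sphi.
    have [g0 [sg0 g0x]] := (chi_ss x bs0).1 sphi.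
    split.
      move=> [l [s [bs sU ->]]] /= [[_ [_ E]] _].
      have sg : s g0 by apply: (germ_mem E).
      exists g0; split; first exact: sU.
      rewrite /F1 -g0x; apply: germ_inter => //; [exact: sb_bis|exact: sb_mem].
    move=> [g [Ug E]]; have E1 : chi x = chi (src g) by case: E.
    have xg : x = src g.
      exact: (chi_inj Hs E1).
    have s0g : s0 g.
      apply: (@germ_mem (sb g) s0 x); last by rewrite xg.
        by have := germ_sym E; rewrite /F1 -xg.
      exact: sb_mem.
    have /bisectionP [og _ _] := sb_bis g.
    have bs : bisection G (sb g `&` U) by apply: (bisection_sub (sb_bis g) (openI og oU)) => k [].
    exists [:: Bs (sb g `&` U)].
      by exists (sb g `&` U); split=> // k [].
    have gv : germ_valid G (s0, chi x) by split=> //; split=> //; rewrite -Ex.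
    split; last exact: gv.
    split; first exact: gv.
    split.
      split; first exact: chi_char.
      apply/chi_ss => //; exists g; split; last by rewrite xg.
      by split=> //; exact: sb_mem.
    rewrite /= xg; apply: germ_inter => //.
    by split=> //; exact: sb_mem.
Qed.

End Main.
End S.

Theorem proposition5p4 (O A : topologicalType) (G : groupoid_data O A) :
  is_top_groupoid G -> etale G -> sober O ->
  [/\ (forall e, irreducible_idem G e -> is_character G (phi_e G e)),
      S_invariant G (Xset G) &
      exists (F0 : O -> (set A -> bool)) (F1 : A -> germ A),
        germ_restriction_iso G F0 F1].
Proof.
move=> HG Het Hs; split.
- by move=> e ie; apply: (part1 HG Het Hs).
- exact: (part2 HG Het Hs).
- by exists (chi G), (F1 Het); apply: (part3 HG Het Hs).
Qed.
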